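(* For any $\alpha,\beta\in\mathbb C$ with $\mathrm{Re}(\alpha+\beta)>0$ and any $\lambda_1,\lambda_2,\mu_1,\mu_2\in\mathbb R$, $$\int_{\mathbb R^2}e^{-\alpha(\lambda_1+\lambda_2-\kappa_1-\kappa_2)-\beta(\mu_1+\mu_2-\kappa_1-\kappa_2)-e^{-(\lambda_1-\kappa_1)}-e^{-(\kappa_1-\lambda_2)}-e^{-(\lambda_2-\kappa_2)}-e^{-(\mu_1-\kappa_1)}-e^{-(\kappa_1-\mu_2)}-e^{-(\mu_2-\kappa_2)}}\,d\kappa_1d\kappa_2$$ $$=\int_{\mathbb R^2}e^{-\alpha(\pi_1+\pi_2-\mu_1-\mu_2)-\beta(\pi_1+\pi_2-\lambda_1-\lambda_2)-e^{-(\pi_1-\lambda_1)}-e^{-(\lambda_1-\pi_2)}-e^{-(\pi_2-\lambda_2)}-e^{-(\pi_1-\mu_1)}-e^{-(\mu_1-\pi_2)}-e^{-(\pi_2-\mu_2)}}\,d\pi_1d\pi_2,$$ and both integrals are finite (absolutely convergent). *)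

(* Defs.v *)
From HB Require Import structures.
From mathcomp Require Import all_boot all_order all_algebra.
From mathcomp Require Import all_classical all_reals all_analysis.
From mathcomp Require Import complex.
Set Implicit Arguments. Unset Strict Implicit. Unset Printing Implicit Defensive.
Import Order.TTheory GRing.Theory Num.Theory.
Local Open Scope ring_scope.
Local Open Scope complex_scope.

Definition cexp (R : realType) (z : R[i]) : R[i] :=
  (expR (complex.Re z) * cos (complex.Im z)) +i* (expR (complex.Re z) * sin (complex.Im z)).

Definition leb2 (R : realType) :=
  ((@lebesgue_measure R) \x (@lebesgue_measure R))%E.

Definition cintegrable2 (R : realType) (F : R * R -> R[i]) : Prop :=
  [/\ measurable_fun setT (fun k => complex.Re (F k)),
      measurable_fun setT (fun k => complex.Im (F k)) &
      (\int[@leb2 R]_(k in setT) (Normc.normc (F k))%:E < +oo)%E].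

Definition cint2 (R : realType) (F : R * R -> R[i]) : R[i] :=
  (Rintegral (@leb2 R) setT (fun k => complex.Re (F k)))
    +i* (Rintegral (@leb2 R) setT (fun k => complex.Im (F k))).

Definition lhs_integrand (R : realType) (a b : R[i]) (l1 l2 m1 m2 : R)
    (k : R * R) : R[i] :=
  let: (k1, k2) := k in
  cexp (- a * ((l1 + l2 - k1 - k2)%:C) - b * ((m1 + m2 - k1 - k2)%:C)
        - (expR (- (l1 - k1)) + expR (- (k1 - l2)) + expR (- (l2 - k2))
           + expR (- (m1 - k1)) + expR (- (k1 - m2)) + expR (- (m2 - k2)))%:C).

Definition rhs_integrand (R : realType) (a b : R[i]) (l1 l2 m1 m2 : R)
    (p : R * R) : R[i] :=
  let: (p1, p2) := p in
  cexp (- a * ((p1 + p2 - m1 - m2)%:C) - b * ((p1 + p2 - l1 - l2)%:C)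
        - (expR (- (p1 - l1)) + expR (- (l1 - p2)) + expR (- (p2 - l2))
           + expR (- (p1 - m1)) + expR (- (m1 - p2)) + expR (- (p2 - m2)))%:C).

(* Main.v *)
Require Import Defs.
From HB Require Import structures.
From mathcomp Require Import all_boot all_order all_algebra.
From mathcomp Require Import all_classical all_reals all_analysis.
From mathcomp Require Import complex measurable_realfun ring lra.
Set Implicit Arguments. Unset Strict Implicit. Unset Printing Implicit Defensive.
Import Order.TTheory GRing.Theory Num.Theory.
Local Open Scope classical_set_scope.
Local Open Scope ring_scope.

Definition refl {R : realType} (c : R) : measurableTypeR R -> measurableTypeR R := fun x => c - x.
Lemma measurable_refl (R : realType) (c : R) : measurable_fun setT (refl c).
Proof. apply: measurable_funB. exact: measurable_cst. exact: measurable_id. Qed.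
Lemma lebesgue_refl (R : realType) (c : R) (A : set R) : measurable A ->
  pushforward lebesgue_measure (refl c) A = lebesgue_measure A.
Proof.
move=> mA; apply/esym/lebesgue_measure_unique => //=; try exact: measurable_refl.
move=> _ _ [[a b]] _ <-.
rewrite /pushforward.
have -> : (refl c) @^-1` `]a, b] = `[c - b, c - a[%classic.
  apply/funext => x /=; apply/propext; rewrite /refl !in_itv /=.
  split => /andP [h1 h2]; apply/andP; split; lra.
rewrite !lebesgue_measure_itv/= !lte_fin.
have -> : (c - b < c - a) = (a < b) by apply/idP/idP; lra.
case: ifP => // _; congr EFin; lra.
Qed.

Lemma ge0_integral_refl (R : realType) (c : R) (h : measurableTypeR R -> \bar R) :
  measurable_fun setT h -> (forall x, (0 <= h x)%E) ->
  (\int[lebesgue_measure]_x h (c - x)%R = \int[lebesgue_measure]_x h x)%E.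
Proof.
move=> mh h0.
have := @ge0_integral_pushforward _ _ _ _ R _ (measurable_refl c) lebesgue_measure setT h measurableT mh (fun y _ => h0 y).
rewrite preimage_setT => <-.
apply: eq_measure_integral.
  move=> X mX Y; exact: (measurable_refl c).
move=> ? A mA _; exact: lebesgue_refl.
Qed.

Lemma psi_int (R : realType) (g D : R) : 0 < g -> 0 < D ->
  (\int[lebesgue_measure]_x (expR (g * x - D * expR x))%:E < +oo)%E.
Proof.
move=> g0 D0.
set s := ln ((g + 1) / D).
have es : expR s = (g + 1) / D by rewrite /s lnK // posrE divr_gt0 // ltr_wpDl // ltW.
set K := expR ((g + 1) * (s - 1)).
have b1 x : expR (g * x - D * expR x) <= K * expR (- x).
  rewrite /K -expRD ler_expR.
  have ex : D * expR x = (g + 1) * expR (x - s).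
    have -> : expR x = expR s * expR (x - s) by rewrite -expRD; congr expR; ring.
    rewrite es; field; exact: lt0r_neq0.
  have H : (g + 1) * (1 + (x - s)) <= D * expR x.
    by rewrite ex ler_wpM2l ?expR_ge1Dx // addr_ge0 // ltW.
  nra.
have b2 x : expR (g * x - D * expR x) <= expR (g * x).
  by rewrite ler_expR lerBlDr lerDl mulr_ge0 // ?expR_ge0 // ltW.
have K0 : 0 < K by exact: expR_gt0.
pose Phi x := g^-1 * exponential_pdf g (0 - x) + K * exponential_pdf 1 x.
have mpsi : measurable_fun setT (fun x : R => expR (g * x - D * expR x)).
  apply: (measurableT_comp (@measurable_expR R)).
  apply: measurable_funB; apply: measurable_funM; try exact: measurable_cst.
    exact: measurable_id.
  exact: (@measurable_expR R).
have mpdf1 : measurable_fun setT (exponential_pdf (1 : R)) by exact: measurable_exponential_pdf.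
have mpdfg : measurable_fun setT (exponential_pdf g) by exact: measurable_exponential_pdf.
have pdf1 x : 0 <= exponential_pdf (1 : R) x by exact: exponential_pdf_ge0.
have pdfg x : 0 <= exponential_pdf g x by apply: exponential_pdf_ge0; exact: ltW.
apply: (@le_lt_trans _ _ (\int[lebesgue_measure]_x (Phi x)%:E)%E).
  apply: ge0_le_integral => //.
  - exact/measurable_EFinP.
  - apply/measurable_EFinP; apply: measurable_funD; apply: measurable_funM;
      try exact: measurable_cst.
      exact: (measurableT_comp mpdfg (measurable_refl 0)).
    exact: mpdf1.
  move=> x _; rewrite lee_fin /Phi.
  have [x0|x0] := leP x 0.
    rewrite exponential_pdfE ?subr_ge0 //= mulrA mulVf ?lt0r_neq0 // mul1r.
    apply: (le_trans (b2 x)).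
    rewrite (_ : - g * (0 - x) = g * x); last ring.
    by rewrite lerDl mulr_ge0 // ltW.
  rewrite (exponential_pdfE 1 (ltW x0)) /= mul1r mulN1r.
  apply: (le_trans (b1 x)); rewrite lerDr mulr_ge0 //.
  by rewrite invr_ge0 ltW.

rewrite /Phi.
under eq_integral do rewrite EFinD EFinM EFinM.
rewrite ge0_integralD //; last 4 first.
- by move=> x _; rewrite -EFinM lee_fin mulr_ge0 // invr_ge0 ltW.
- apply/measurable_EFinP; apply: measurable_funM; try exact: measurable_cst.
  exact: (measurableT_comp mpdfg (measurable_refl 0)).
- by move=> x _; rewrite -EFinM lee_fin mulr_ge0 // ltW.
- apply/measurable_EFinP; apply: measurable_funM; try exact: measurable_cst.
  exact: mpdf1.
rewrite ge0_integralZl //; last 3 first.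
- apply/measurable_EFinP; exact: (measurableT_comp mpdfg (measurable_refl 0)).
- by move=> x _; rewrite lee_fin.
- by rewrite lee_fin invr_ge0 ltW.
rewrite ge0_integralZl //; last 3 first.
- exact/measurable_EFinP.
- by move=> x _; rewrite lee_fin.
- by rewrite lee_fin ltW.
rewrite (@ge0_integral_refl R 0 (fun x => (exponential_pdf g x)%:E)) //; last first.
  exact/measurable_EFinP.
rewrite !integral_exponential_pdf //.
by rewrite !mule1 -EFinD ltry.
Qed.

Lemma ge0_integral_T2 (R : realType) (b0 c : R) (h : measurableTypeR R * measurableTypeR R -> \bar R) :
  measurable_fun setT h -> (forall x, (0 <= h x)%E) ->
  (\int[@leb2 R]_p h (b0 - p.2, c - p.1)%R = \int[@leb2 R]_p h p)%E.
Proof.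
move=> mh h0.
have mT' : measurable_fun setT (fun p : R * R => (b0 - p.2, c - p.1)%R).
  apply: measurable_fun_pair.
    exact: (measurableT_comp (measurable_refl b0) measurable_snd).
  exact: (measurableT_comp (measurable_refl c) measurable_fst).
have mT : measurable_fun setT (fun p : measurableTypeR R * measurableTypeR R => ((b0 - p.2)%R : measurableTypeR R, (c - p.1)%R : measurableTypeR R)).
  exact: mT'.
rewrite /leb2 (fubini_tonelli1 (fun p : measurableTypeR R * measurableTypeR R => h (b0 - p.2, c - p.1)%R)) /=; last 2 first.
  exact: measurableT_comp mh mT.
  by move=> x; exact: h0.
rewrite (fubini_tonelli2 h) //.
rewrite /fubini_F /fubini_G /=.
transitivity (\int[lebesgue_measure]_x (fun y => \int[lebesgue_measure]_u h (u, y)) (c - x)%R)%E.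
  apply: eq_integral => x _ /=.
  apply: (@ge0_integral_refl R b0 (fun u : measurableTypeR R => h (u, ((c - x)%R : measurableTypeR R)))) => //.
  exact: measurable_fun_pair1.
apply: (@ge0_integral_refl R c (fun y => \int[lebesgue_measure]_u h (u, y))%E).
  exact: (measurable_fun_fubini_tonelli_G h).
by move=> y; apply: integral_ge0 => u _.
Qed.

Lemma integral_T2 (R : realType) (b0 c : R) (f : measurableTypeR R * measurableTypeR R -> R) :
  measurable_fun setT f ->
  (\int[@leb2 R]_p (f (b0 - p.2, c - p.1)%R)%:E = \int[@leb2 R]_p (f p)%:E)%E.
Proof.
move=> mf.
have mEf : measurable_fun setT (EFin \o f) by exact/measurable_EFinP.
rewrite integralE [RHS]integralE; congr (_ - _)%E.
  rewrite -(@ge0_integral_T2 R b0 c ((EFin \o f)^\+)%E) //.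
  - by apply: eq_integral => p _; rewrite !funeposE.
  - by apply: measurable_funepos; exact: mEf.
rewrite -(@ge0_integral_T2 R b0 c ((EFin \o f)^\-)%E) //.
- by apply: eq_integral => p _; rewrite !funenegE.
- by apply: measurable_funeneg; exact: mEf.
Qed.

Section Main.
Local Open Scope complex_scope.
Variables (R : realType) (ar ai br bi l1 l2 m1 m2 : R).
Definition PP (k1 k2 : R) : R :=
  - ar * (l1 + l2 - k1 - k2) - br * (m1 + m2 - k1 - k2) -
     (expR (- (l1 - k1)) + expR (- (k1 - l2)) + expR (- (l2 - k2)) +
      expR (- (m1 - k1)) + expR (- (k1 - m2)) + expR (- (m2 - k2))).
Definition QQ (k1 k2 : R) : R :=
  - ai * (l1 + l2 - k1 - k2) - bi * (m1 + m2 - k1 - k2).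

Notation F := (lhs_integrand (ar +i* ai) (br +i* bi) l1 l2 m1 m2).
Notation G := (rhs_integrand (ar +i* ai) (br +i* bi) l1 l2 m1 m2).

Lemma ReF k : complex.Re (F k) = expR (PP k.1 k.2) * cos (QQ k.1 k.2).
Proof.
case: k => k1 k2; rewrite /lhs_integrand /cexp /= /PP /QQ.
congr (expR _ * cos _); ring.
Qed.
Lemma ImF k : complex.Im (F k) = expR (PP k.1 k.2) * sin (QQ k.1 k.2).
Proof.
case: k => k1 k2; rewrite /lhs_integrand /cexp /= /PP /QQ.
congr (expR _ * sin _); ring.
Qed.
Lemma normF k : Normc.normc (F k) = expR (PP k.1 k.2).
Proof.
have -> : F k = (complex.Re (F k)) +i* (complex.Im (F k)) by case: (F k).
rewrite ReF ImF /= !exprMn -mulrDr cos2Dsin2 mulr1 sqrtr_sqr ger0_norm //.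
Qed.

Ltac mtac := repeat first
  [ exact: measurable_cst | exact: measurable_fst | exact: measurable_snd
  | apply: measurable_funD | apply: measurable_funB | apply: measurable_funM
  | apply: measurable_funN
  | apply: (measurableT_comp (@measurable_expR R))
  | apply: (measurableT_comp (continuous_measurable_fun (@continuous_cos R)))
  | apply: (measurableT_comp (continuous_measurable_fun (@continuous_sin R))) ].

Lemma measurable_PP : measurable_fun setT (fun k : R * R => PP k.1 k.2).
Proof. rewrite /PP; mtac. Qed.
Lemma measurable_QQ : measurable_fun setT (fun k : R * R => QQ k.1 k.2).
Proof. rewrite /QQ; mtac. Qed.

Lemma measurable_ReF : measurable_fun setT (fun k => complex.Re (F k)).
Proof.
rewrite (_ : (fun k => _) = (fun k : R * R => expR (PP k.1 k.2) * cos (QQ k.1 k.2))); last first.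
  by apply/funext => k; rewrite ReF.
apply: measurable_funM.
  exact: (measurableT_comp (@measurable_expR R) measurable_PP).
exact: (measurableT_comp (continuous_measurable_fun (@continuous_cos R)) measurable_QQ).
Qed.
Lemma measurable_ImF : measurable_fun setT (fun k => complex.Im (F k)).
Proof.
rewrite (_ : (fun k => _) = (fun k : R * R => expR (PP k.1 k.2) * sin (QQ k.1 k.2))); last first.
  by apply/funext => k; rewrite ImF.
apply: measurable_funM.
  exact: (measurableT_comp (@measurable_expR R) measurable_PP).
exact: (measurableT_comp (continuous_measurable_fun (@continuous_sin R)) measurable_QQ).
Qed.
Lemma PP_bound k1 k2 :
  PP k1 k2 <= (- ar * (l1 + l2) - br * (m1 + m2))
    + ((ar + br) * k1 - (expR (- l1) + expR (- m1)) * expR k1)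
    + ((ar + br) * k2 - (expR (- l2) + expR (- m2)) * expR k2).
Proof.
rewrite /PP.
have e1 : expR (- (l1 - k1)) = expR (- l1) * expR k1 by rewrite -expRD; congr expR; ring.
have e2 : expR (- (m1 - k1)) = expR (- m1) * expR k1 by rewrite -expRD; congr expR; ring.
have e3 : expR (- (l2 - k2)) = expR (- l2) * expR k2 by rewrite -expRD; congr expR; ring.
have e4 : expR (- (m2 - k2)) = expR (- m2) * expR k2 by rewrite -expRD; congr expR; ring.
have p1 := expR_ge0 (- (k1 - l2)).
have p2 := expR_ge0 (- (k1 - m2)).
rewrite e1 e2 e3 e4.
nra.
Qed.

Lemma intF_fin : 0 < ar + br ->
  (\int[@leb2 R]_k (expR (PP k.1 k.2))%:E < +oo)%E.
Proof.
move=> g0.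
set g := ar + br.
set c0 := - ar * (l1 + l2) - br * (m1 + m2).
set A := expR (- l1) + expR (- m1).
set D := expR (- l2) + expR (- m2).
have A0 : 0 < A by rewrite /A addr_gt0 // expR_gt0.
have D0 : 0 < D by rewrite /D addr_gt0 // expR_gt0.
pose psiA x := expR (g * x - A * expR x).
pose psiD x := expR (g * x - D * expR x).
have mpsiA : measurable_fun setT psiA.
  rewrite /psiA; apply: (measurableT_comp (@measurable_expR R)).
  apply: measurable_funB; apply: measurable_funM; try exact: measurable_cst.
    exact: measurable_id.
  exact: (@measurable_expR R).
have mpsiD : measurable_fun setT psiD.
  rewrite /psiD; apply: (measurableT_comp (@measurable_expR R)).
  apply: measurable_funB; apply: measurable_funM; try exact: measurable_cst.
    exact: measurable_id.
  exact: (@measurable_expR R).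
have IA := psi_int g0 A0.
have ID := psi_int g0 D0.
have IA0 : (0 <= \int[lebesgue_measure]_x (psiA x)%:E)%E.
  by apply: integral_ge0 => x _; rewrite lee_fin expR_ge0.
have ID0 : (0 <= \int[lebesgue_measure]_x (psiD x)%:E)%E.
  by apply: integral_ge0 => x _; rewrite lee_fin expR_ge0.
have mprod : measurable_fun setT (fun k : R * R => expR c0 * psiA k.1 * psiD k.2).
  apply: measurable_funM; last exact: (measurableT_comp mpsiD measurable_snd).
  apply: measurable_funM; first exact: measurable_cst.
  exact: (measurableT_comp mpsiA measurable_fst).
apply: (@le_lt_trans _ _ (\int[@leb2 R]_k (expR c0 * psiA k.1 * psiD k.2)%:E)%E).
  apply: ge0_le_integral => //.
  - apply/measurable_EFinP; exact: (measurableT_comp (@measurable_expR R) (measurable_PP)).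
  - exact/measurable_EFinP.
  - move=> [k1 k2] _ /=; rewrite lee_fin /psiA /psiD -!expRD ler_expR.
    exact: PP_bound.
rewrite /leb2 (fubini_tonelli1 (fun k : measurableTypeR R * measurableTypeR R => (expR c0 * psiA k.1 * psiD k.2)%:E)) /=; last 2 first.
  exact/measurable_EFinP.
  by move=> x; rewrite lee_fin !mulr_ge0 // expR_ge0.
rewrite /fubini_F /=.
under eq_integral => x _ do under eq_integral => y _ do rewrite EFinM.
under eq_integral => x _.
  rewrite ge0_integralZl //; last 3 first.
  - exact/measurable_EFinP.
  - by move=> y _; rewrite lee_fin expR_ge0.
  - by rewrite lee_fin mulr_ge0 // expR_ge0.
  over.
rewrite ge0_integralZr //; last 2 first.
- apply/measurable_EFinP; apply: measurable_funM; [exact: measurable_cst | exact: mpsiA].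
- by move=> x _; rewrite lee_fin mulr_ge0 // expR_ge0.
under eq_integral do rewrite EFinM.
rewrite ge0_integralZl //; last 2 first.
- apply/measurable_EFinP; exact: mpsiA.
- by move=> x _; rewrite lee_fin expR_ge0.
have fA : (\int[lebesgue_measure]_x (psiA x)%:E)%E \is a fin_num.
  rewrite ge0_fin_numE; first exact: IA.
  by apply: integral_ge0 => x _; rewrite lee_fin expR_ge0.
have fD : (\int[lebesgue_measure]_x (psiD x)%:E)%E \is a fin_num.
  rewrite ge0_fin_numE; first exact: ID.
  by apply: integral_ge0 => x _; rewrite lee_fin expR_ge0.
rewrite -(fineK fA) -(fineK fD) -!EFinM; exact: ltry.
Qed.
Definition AA := expR (- l1) + expR (- m1).
Definition DD := expR (- l2) + expR (- m2).
Definition b0 := l2 + m2 + ln DD - ln AA.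
Definition cc := l1 + m1 + ln AA - ln DD.

Lemma sumE_gen (x y : R) p1 p2 :
  expR x = expR l2 * expR m2 * DD / AA ->
  expR y = expR l1 * expR m1 * AA / DD ->
  expR (- (p1 - l1)) + expR (- (l1 - p2)) + expR (- (p2 - l2)) +
  expR (- (p1 - m1)) + expR (- (m1 - p2)) + expR (- (p2 - m2)) =
  expR (- (l1 - (x - p2))) + expR (- (x - p2 - l2)) +
  expR (- (l2 - (y - p1))) + expR (- (m1 - (x - p2))) +
  expR (- (x - p2 - m2)) + expR (- (m2 - (y - p1))).
Proof.
move=> eb ec.
have E2 u v : expR (- (u - v)) = expR v / expR u by rewrite opprB expRD expRN.
have E5 u v : expR (u - v) = expR u / expR v by rewrite expRD expRN.
rewrite !E2 !E5 eb ec /AA /DD !expRN.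
have h1 := expR_gt0 l1. have h2 := expR_gt0 l2.
have h3 := expR_gt0 m1. have h4 := expR_gt0 m2.
have h5 := expR_gt0 p1. have h6 := expR_gt0 p2.
field.
have n1 := lt0r_neq0 h1. have n2 := lt0r_neq0 h2. have n3 := lt0r_neq0 h3.
have n4 := lt0r_neq0 h4. have n5 := lt0r_neq0 h5. have n6 := lt0r_neq0 h6.
have n7 : expR m2 + expR l2 != 0 by apply: lt0r_neq0; exact: addr_gt0.
have n8 : expR m1 + expR l1 != 0 by apply: lt0r_neq0; exact: addr_gt0.
by rewrite n1 n2 n3 n4 n5 n6 n7 n8.
Qed.

Lemma sumE p1 p2 :
  expR (- (p1 - l1)) + expR (- (l1 - p2)) + expR (- (p2 - l2)) +
  expR (- (p1 - m1)) + expR (- (m1 - p2)) + expR (- (p2 - m2)) =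
  expR (- (l1 - (b0 - p2))) + expR (- (b0 - p2 - l2)) +
  expR (- (l2 - (cc - p1))) + expR (- (m1 - (b0 - p2))) +
  expR (- (b0 - p2 - m2)) + expR (- (m2 - (cc - p1))).
Proof.
have A0 : 0 < AA by rewrite /AA addr_gt0 // expR_gt0.
have D0 : 0 < DD by rewrite /DD addr_gt0 // expR_gt0.
have lA : expR (ln AA) = AA by rewrite lnK // posrE.
have lD : expR (ln DD) = DD by rewrite lnK // posrE.
apply: sumE_gen.
  by rewrite /b0 !expRD expRN lA lD.
by rewrite /cc !expRD expRN lA lD.
Qed.

Lemma GF p : G p = F (b0 - p.2, cc - p.1).
Proof.
case: p => p1 p2; rewrite /lhs_integrand /rhs_integrand /cexp /=.
congr (Complex _ _).
- congr (expR _ * cos _).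
    by rewrite (sumE p1 p2); congr (_ - _); rewrite /b0 /cc; ring.
  by rewrite /b0 /cc; ring.
- congr (expR _ * sin _).
    by rewrite (sumE p1 p2); congr (_ - _); rewrite /b0 /cc; ring.
  by rewrite /b0 /cc; ring.
Qed.
End Main.

Unset Implicit Arguments.
Local Close Scope classical_set_scope.
Local Open Scope ring_scope.
Local Open Scope complex_scope.

Theorem lemma3p5 (R : realType) (a b : R[i]) (l1 l2 m1 m2 : R) :
  0 < complex.Re (a + b) ->
  [/\ cintegrable2 (lhs_integrand a b l1 l2 m1 m2),
      cintegrable2 (rhs_integrand a b l1 l2 m1 m2) &
      cint2 (lhs_integrand a b l1 l2 m1 m2)
      = cint2 (rhs_integrand a b l1 l2 m1 m2)].
Proof.
case: a => ar ai; case: b => br bi /= hab.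
set F := lhs_integrand _ _ _ _ _ _.
set G := rhs_integrand _ _ _ _ _ _.
set b0' := b0 l1 l2 m1 m2.
set c' := cc l1 l2 m1 m2.
have hG p : G p = F (b0' - p.2, c' - p.1) by exact: GF.
have mRe : measurable_fun setT (fun k => complex.Re (F k)) by exact: measurable_ReF.
have mIm : measurable_fun setT (fun k => complex.Im (F k)) by exact: measurable_ImF.
have mT : measurable_fun setT (fun p : R * R => (b0' - p.2, c' - p.1)%R).
  apply: measurable_fun_pair.
    exact: (measurableT_comp (measurable_refl b0') measurable_snd).
  exact: (measurableT_comp (measurable_refl c') measurable_fst).
have mN : measurable_fun setT (fun k : R * R => (Normc.normc (F k))%:E).
  apply/measurable_EFinP.
  rewrite (_ : (fun k => _) = (fun k : R * R => expR (PP ar br l1 l2 m1 m2 k.1 k.2))); last first.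
    by apply/funext => k; rewrite normF.
  exact: (measurableT_comp (@measurable_expR R) (measurable_PP _ _ _ _ _ _)).
have nF : (\int[@leb2 R]_(k in setT) (Normc.normc (F k))%:E < +oo)%E.
  under eq_integral do rewrite normF.
  exact: intF_fin.
split.
- by split.
- split.
  + rewrite (_ : (fun k => _) = (fun p => complex.Re (F (b0' - p.2, c' - p.1)))); last first.
      by apply/funext => p; rewrite hG.
    exact: measurableT_comp mRe mT.
  + rewrite (_ : (fun k => _) = (fun p => complex.Im (F (b0' - p.2, c' - p.1)))); last first.
      by apply/funext => p; rewrite hG.
    exact: measurableT_comp mIm mT.
  + under eq_integral do rewrite hG.
    rewrite (ge0_integral_T2 b0' c' (h := fun k => (Normc.normc (F k))%:E)) //.
    by move=> x; rewrite lee_fin; case: (F x) => u v; exact: sqrtr_ge0.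
- rewrite /cint2; congr (_ +i* _); rewrite /Rintegral.
  + under [in RHS]eq_integral do rewrite hG.
    by rewrite (integral_T2 b0' c' (f := fun k => complex.Re (F k))).
  + under [in RHS]eq_integral do rewrite hG.
    by rewrite (integral_T2 b0' c' (f := fun k => complex.Im (F k))).
Qed.
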